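(* Let $A$ be a Keigher ring and $X=\operatorname{Spec}^\Delta A$. Let $\varphi(X)\colon\mathcal O(X)\to\mathcal O'(X)$ be the homomorphism $\varphi(X)(f)(\mathfrak p)=f(\mathfrak p)\bmod \mathfrak pA_{\mathfrak p}$ (the image of $f(\mathfrak p)\in A_{\mathfrak p}$ in the residue field $A_{\mathfrak p}/\mathfrak pA_{\mathfrak p}=K(\mathfrak p)$). Then $\ker\varphi(X)$ equals the nilradical of $\mathcal O(X)$.
   Context: All rings are commutative with unit. A differential ring is a ring with finitely many pairwise commuting derivations. A Keigher ring is a differential ring in which the radical $\{x: x^n\in\mathfrak a\text{ for some }n\}$ of every differential ideal $\mathfrak a$ is again a differential ideal. $X=\operatorname{Spec}^\Delta A$ is the set of prime ideals of $A$ closed under all derivations, with the Kolchin topology (closed sets $V(E)=\{\mathfrak p: E\subseteq\mathfrak p\}$). For $\mathfrak p\in X$, $A_{\mathfrak p}$ is the localization at $A\setminus\mathfrak p$ and $K(\mathfrak p)$ is the fraction field of $A/\mathfrak p$. Structure sheaf: for open $U\subseteq X$, $\mathcal O(U)$ is the set of functions $f$ on $U$ with $f(\mathfrak p)\in A_{\mathfrak p}$ that are regular at every point of $U$, where $f$ is regular at $\mathfrak p$ if there exist an open neighborhood $W\subseteq U$ of $\mathfrak p$ and $a,b\in A$ with $b\notin\mathfrak q$ and $f(\mathfrak q)=a/b$ in $A_{\mathfrak q}$ for all $\mathfrak q\in W$; it is a differential ring with pointwise operations and derivations. Analogously, $\mathcal O'(U)$ is the set of functions $f$ on $U$ with $f(\mathfrak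 p)\in K(\mathfrak p)$ that are regular at every point of $U$, where regularity means locally $f(\mathfrak q)=a/b$ in $K(\mathfrak q)$ with $b\notin\mathfrak q$. *)

(* Defs.v *)
From mathcomp Require Import all_boot all_algebra.
Set Implicit Arguments. Unset Strict Implicit. Unset Printing Implicit Defensive.
Import GRing.Theory.
Local Open Scope ring_scope.

Section Diff.
Variable A : comPzRingType.

Definition is_ideal (I : A -> Prop) : Prop :=
  [/\ I 0, (forall x y, I x -> I y -> I (x + y)) & (forall r x, I x -> I (r * x))].

Definition is_prime (P : A -> Prop) : Prop :=
  [/\ is_ideal P, ~ P 1 & (forall x y, P (x * y) -> P x \/ P y)].

Definition is_derivation (d : A -> A) : Prop :=
  (forall x y, d (x + y) = d x + d y) /\ (forall x y, d (x * y) = x * d y + y * d x).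

Definition is_diff_structure (n : nat) (D : 'I_n -> A -> A) : Prop :=
  (forall i, is_derivation (D i)) /\ (forall i j x, D i (D j x) = D j (D i x)).

Definition is_diff_ideal n (D : 'I_n -> A -> A) (I : A -> Prop) : Prop :=
  is_ideal I /\ (forall i x, I x -> I (D i x)).

Definition radical (I : A -> Prop) : A -> Prop := fun x => exists m : nat, I (x ^+ m).

Definition keigher n (D : 'I_n -> A -> A) : Prop :=
  forall I, is_diff_ideal D I -> is_diff_ideal D (radical I).

Definition is_diff_prime n (D : 'I_n -> A -> A) (P : A -> Prop) : Prop :=
  is_prime P /\ (forall i x, P x -> P (D i x)).

(* Points of X = Spec^Delta A. *)
Record dpoint n (D : 'I_n -> A -> A) := DPoint {
  dcarrier :> A -> Prop;
  dpoint_prime : is_diff_prime D dcarrier }.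

Definition kolchin_open n (D : 'I_n -> A -> A) (U : dpoint D -> Prop) : Prop :=
  exists E : A -> Prop, forall q : dpoint D, U q <-> ~ (forall x, E x -> q x).

(* Elements of A_p are represented by fractions (a, b) with b not in p;
   equality in A_p: a/b = a'/b' iff s (a b' - a' b) = 0 for some s not in p. *)
Definition loc_eq (P : A -> Prop) (u v : A * A) : Prop :=
  exists s, ~ P s /\ s * (u.1 * v.2 - v.1 * u.2) = 0.

(* Equality in K(p) = Frac(A/p): (a mod p)/(b mod p) = (a' mod p)/(b' mod p)
   iff a b' - a' b lies in p. *)
Definition frac_eq (P : A -> Prop) (u v : A * A) : Prop :=
  P (u.1 * v.2 - v.1 * u.2).

Definition in_O n (D : 'I_n -> A -> A) (U : dpoint D -> Prop)
    (f : dpoint D -> A * A) : Prop :=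
  (forall p : dpoint D, U p -> ~ p (f p).2) /\
  forall p : dpoint D, U p ->
    exists W : dpoint D -> Prop,
      [/\ kolchin_open W, W p, (forall q, W q -> U q) &
          exists a b : A, forall q : dpoint D, W q -> ~ q b /\ loc_eq q (f q) (a, b)].

Definition in_O' n (D : 'I_n -> A -> A) (U : dpoint D -> Prop)
    (f : dpoint D -> A * A) : Prop :=
  (forall p : dpoint D, U p -> ~ p (f p).2) /\
  forall p : dpoint D, U p ->
    exists W : dpoint D -> Prop,
      [/\ kolchin_open W, W p, (forall q, W q -> U q) &
          exists a b : A, forall q : dpoint D, W q -> ~ q b /\ frac_eq q (f q) (a, b)].

Definition full n (D : 'I_n -> A -> A) : dpoint D -> Prop := fun _ => True.

(* phi(X): the fraction a/b in A_p is sent to (a mod p)/(b mod p) in K(p). *)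
Definition phi n (D : 'I_n -> A -> A) (f : dpoint D -> A * A) : dpoint D -> A * A :=
  fun p => f p.

Definition loc_pow (u : A * A) (k : nat) : A * A := (u.1 ^+ k, u.2 ^+ k).

Definition in_ker_phi n (D : 'I_n -> A -> A) (f : dpoint D -> A * A) : Prop :=
  forall p : dpoint D, frac_eq p (phi f p) (0, 1).

(* f lies in the nilradical of O(X): f^k = 0 in O(X) for some k
   (equality in O(X) is pointwise equality in A_p, 0 = 0/1). *)
Definition in_nilradical_O n (D : 'I_n -> A -> A) (f : dpoint D -> A * A) : Prop :=
  exists k : nat, forall p : dpoint D, loc_eq p (loc_pow (f p) k) (0, 1).

End Diff.

(* Main.v *)
Require Import Defs.
From mathcomp Require Import all_boot all_algebra.
From Stdlib Require Import Classical ClassicalEpsilon FunctionalExtensionality PropExtensionality.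
Set Implicit Arguments.

Definition incl {T : Type} (X Y : T -> Prop) : Prop := forall y, X y -> Y y.
Definition ssup {T : Type} (J : T -> Prop) (C : (T -> Prop) -> Prop) : T -> Prop :=
  fun y => J y \/ exists K, C K /\ K y.

Inductive tower (T : Type) (g : (T -> Prop) -> (T -> Prop)) (J : T -> Prop) :
  (T -> Prop) -> Prop :=
 | tw_succ I : tower g J I -> tower g J (g I)
 | tw_sup (C : (T -> Prop) -> Prop) : (forall K, C K -> tower g J K) -> tower g J (ssup J C).
Arguments tower {T}.
Arguments tw_succ {T g J I}.
Arguments tw_sup {T g J C}.

Lemma incl_eq (T : Type) (X Y : T -> Prop) : incl X Y -> incl Y X -> X = Y.
Proof.
  intros H1 H2. apply functional_extensionality. intros y.
  apply propositional_extensionality. split; auto.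
Qed.

Section TW.
Variables (T : Type) (g : (T -> Prop) -> (T -> Prop)) (J : T -> Prop).
Hypothesis gext : forall I, incl I (g I).

Lemma tower_J X : tower g J X -> incl J X.
Proof.
  induction 1 as [I HI IH|C HC IH].
  - intros y Hy. apply gext, IH, Hy.
  - intros y Hy. left. exact Hy.
Qed.

Definition extreme (c : T -> Prop) : Prop :=
  forall x, tower g J x -> incl x c -> ~ incl c x -> incl (g x) c.

Lemma lemA c : tower g J c -> extreme c -> forall x, tower g J x -> incl x c \/ incl (g c) x.
Proof.
  intros Hc Ec x Hx. induction Hx as [I HI IH|C HC IH].
  - destruct IH as [Hle|Hge].
    + destruct (classic (incl c I)) as [Hci|Hci].
      * assert (E : I = c) by (apply incl_eq; auto). subst I. right. intros y Hy; exact Hy.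
      * left. apply Ec; auto.
    + right. intros y Hy. apply gext, Hge, Hy.
  - destruct (classic (exists K, C K /\ incl (g c) K)) as [[K [CK HK]]|Hn].
    + right. intros y Hy. right. exists K; auto.
    + left. intros y [Jy|[K [CK Ky]]].
      * apply (tower_J Hc), Jy.
      * destruct (IH K CK) as [h|h]; [apply h, Ky|].
        exfalso; apply Hn; eauto.
Qed.

Lemma lemB c : tower g J c -> extreme c.
Proof.
  induction 1 as [c Hc IHc|C HC IH].
  - intros x Hx Hxle Hnle. destruct (lemA Hc IHc Hx) as [h|h].
    + destruct (classic (incl c x)) as [h2|h2].
      * assert (E : x = c) by (apply incl_eq; auto). subst x. intros y Hy; exact Hy.
      * intros y Hy. apply gext. apply (IHc x Hx h h2 y Hy).
    + exfalso; apply Hnle; exact h.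
  - intros x Hx Hxle Hnle.
    destruct (classic (exists K, C K /\ ~ incl K x)) as [[K [CK HK]]|Hn].
    + destruct (lemA (HC K CK) (IH K CK) Hx) as [h|h].
      * intros y Hy. right. exists K. split; auto. apply (IH K CK x Hx h HK y Hy).
      * exfalso. apply HK. intros y Hy. apply h, gext, Hy.
    + exfalso. apply Hnle. intros y [Jy|[K [CK Ky]]].
      * apply (tower_J Hx), Jy.
      * apply NNPP. intros Hy. apply Hn. exists K. split; auto.
Qed.

Lemma tower_chain x y : tower g J x -> tower g J y -> incl x y \/ incl y x.
Proof.
  intros Hx Hy. destruct (lemA Hy (lemB Hy) Hx) as [h|h]; auto.
  right. intros z Hz. apply h, gext, Hz.
Qed.
End TW.

Lemma zorn_sets (T : Type) (good : (T -> Prop) -> Prop) (J : T -> Prop) :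
  (forall C : (T -> Prop) -> Prop, (forall K, C K -> good K) ->
     (forall K1 K2, C K1 -> C K2 -> incl K1 K2 \/ incl K2 K1) -> good (ssup J C)) ->
  exists I, good I /\ forall K, good K -> incl I K -> incl K I.
Proof.
  intros Hsup. apply NNPP. intros Hno.
  assert (hg : forall I, exists K, incl I K /\ (good I -> good K /\ ~ incl K I)).
  { intros I. destruct (classic (good I)) as [gI|gI].
    - destruct (classic (exists K, good K /\ incl I K /\ ~ incl K I)) as [[K [h1 [h2 h3]]]|hn].
      + exists K. auto.
      + exfalso. apply Hno. exists I. split; auto. intros K gK hIK.
        apply NNPP. intros hKI. apply hn. exists K. auto.
    - exists I. split; [intros y Hy; exact Hy| intros h; contradiction]. }
  set (g := fun I => proj1_sig (constructive_indefinite_description _ (hg I))).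
  assert (gP : forall I, incl I (g I) /\ (good I -> good (g I) /\ ~ incl (g I) I)).
  { intros I. exact (proj2_sig (constructive_indefinite_description _ (hg I))). }
  assert (gext : forall I, incl I (g I)) by (intros I; apply gP).
  assert (Hgood : forall X, tower g J X -> good X).
  { induction 1 as [I HI IH|C HC IH].
    - apply gP, IH.
    - apply Hsup; auto. intros K1 K2 h1 h2. apply (tower_chain (J:=J) gext); auto. }
  set (T0 := ssup J (tower g J)).
  assert (HT0 : tower g J T0) by (apply tw_sup; auto).
  destruct (proj2 (gP T0) (Hgood _ HT0)) as [_ hn].
  apply hn. intros y Hy. right. exists (g T0). split; auto. apply tw_succ, HT0.
Qed.
Unset Implicit Arguments.
Set Implicit Arguments. Unset Strict Implicit.
Set Implicit Arguments. Unset Strict Implicit.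
Import GRing.Theory.
Local Open Scope ring_scope.

Section R.
Variable A : comPzRingType.

Lemma id0 (I : A -> Prop) : is_ideal I -> I 0.
Proof. by case. Qed.
Lemma idD (I : A -> Prop) x y : is_ideal I -> I x -> I y -> I (x + y).
Proof. by case=> _ h _; apply: h. Qed.
Lemma idMl (I : A -> Prop) r x : is_ideal I -> I x -> I (r * x).
Proof. by case=> _ _ h; apply: h. Qed.
Lemma idMr (I : A -> Prop) r x : is_ideal I -> I x -> I (x * r).
Proof. by move=> hI hx; rewrite mulrC; apply: idMl. Qed.
Lemma idN (I : A -> Prop) x : is_ideal I -> I x -> I (- x).
Proof. by move=> hI hx; rewrite -mulN1r; apply: idMl. Qed.
Lemma idB (I : A -> Prop) x y : is_ideal I -> I x -> I y -> I (x - y).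
Proof. by move=> hI hx hy; apply: idD => //; apply: idN. Qed.

Lemma prime_pow (P : A -> Prop) x k : is_prime P -> P (x ^+ k) -> P x.
Proof.
  case=> _ h1 hm. elim: k => [|k IH]; first by rewrite expr0 => /h1.
  by rewrite exprS => /hm [|/IH].
Qed.
Lemma prime_nM (P : A -> Prop) x y : is_prime P -> ~ P x -> ~ P y -> ~ P (x * y).
Proof. by case=> _ _ hm hx hy /hm [] //. Qed.
Lemma prime_npow (P : A -> Prop) x k : is_prime P -> ~ P x -> ~ P (x ^+ k).
Proof. by move=> hP hx /(prime_pow hP). Qed.

Lemma mul0_mono (s y : A) k k' : s * y ^+ k = 0 -> (k <= k')%N -> s * y ^+ k' = 0.
Proof.
  move=> h hk. rewrite -(subnKC hk) exprD mulrA h mul0r //.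
Qed.

Variables (n : nat) (D : 'I_n -> A -> A).
Hypothesis hD : is_diff_structure D.
Hypothesis hK : keigher D.

Lemma D0 i : D i 0 = 0.
Proof.
  have := (proj1 (proj1 hD i)) 0 0. rewrite addr0 => h.
  apply: (@addrI _ (D i 0)). by rewrite addr0 -h.
Qed.

Definition colon (I : A -> Prop) (u : A) : A -> Prop := fun y => I (y * u).

Lemma colon_diff (I : A -> Prop) u : is_diff_ideal D I -> (forall y, radical I y -> I y) ->
  is_diff_ideal D (colon I u).
Proof.
  move=> [hI hId] hrad. split.
  - split; rewrite /colon.
    + by rewrite mul0r; apply: id0.
    + by move=> x y hx hy; rewrite mulrDl; apply: idD.
    + by move=> r x hx; rewrite -mulrA; apply: idMl.
  - move=> i y; rewrite /colon => hy.
    have h1 := hId i _ hy. rewrite (proj2 (proj1 hD i)) in h1.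
    have h2 : I (u * (y * D i u + u * D i y)) by apply: idMl.
    have h3 : I (D i u * (y * u)) by apply: idMl.
    have h4 := idB hI h2 h3.
    have e : u * (y * D i u + u * D i y) - D i u * (y * u) = u * u * D i y.
      by rewrite mulrDr mulrA (mulrC u y) (mulrC (D i u)) addrC addKr mulrA.
    rewrite e in h4.
    apply: hrad. exists 2%N. rewrite expr2.
    have -> : D i y * u * (D i y * u) = D i y * (u * u * D i y).
      by rewrite -!mulrA (mulrC (D i y) u).
    by apply: idMl.
Qed.

Lemma krull (J : A -> Prop) (x : A) : is_diff_ideal D J -> (forall m, ~ J (x ^+ m)) ->
  exists P : A -> Prop, is_diff_prime D P /\ (forall y, J y -> P y) /\ ~ P x.
Proof.
  move=> hJ hx.
  pose good := fun K : A -> Prop =>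
    [/\ is_diff_ideal D K, incl J K & forall m, ~ K (x ^+ m)].
  have hsup : forall C : (A -> Prop) -> Prop, (forall K, C K -> good K) ->
     (forall K1 K2, C K1 -> C K2 -> incl K1 K2 \/ incl K2 K1) -> good (ssup J C).
  { move=> C hC hch. have [hJi hJd] := hJ. split.
    - split; first split.
      + by left; apply: id0.
      + move=> a1 a2 [ja1|[K [CK Ka1]]] [ja2|[K' [CK' Ka2]]].
        * by left; apply: idD.
        * have [[hKi _] hJK _] := hC _ CK'. by right; exists K'; split=> //; apply: idD => //; apply: hJK.
        * have [[hKi _] hJK _] := hC _ CK. by right; exists K; split=> //; apply: idD => //; apply: hJK.
        * have [[hKi _] _ _] := hC _ CK. have [[hKi' _] _ _] := hC _ CK'.
          case: (hch _ _ CK CK') => hinc.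
          -- by right; exists K'; split=> //; apply: idD => //; apply: hinc.
          -- by right; exists K; split=> //; apply: idD => //; apply: hinc.
      + move=> r a [ja|[K [CK Ka]]].
        * by left; apply: idMl.
        * have [[hKi _] _ _] := hC _ CK. by right; exists K; split=> //; apply: idMl.
      + move=> i a [ja|[K [CK Ka]]].
        * by left; apply: hJd.
        * have [[_ hKd] _ _] := hC _ CK. by right; exists K; split=> //; apply: hKd.
    - by move=> a ja; left.
    - move=> m [ja|[K [CK Ka]]]; first exact: (hx m ja).
      have [_ _ hKx] := hC _ CK. exact: (hKx m Ka). }
  have [I [[hI hJI hIx] hmax]] := @zorn_sets _ good J hsup.
  have hrad : forall y, radical I y -> I y.
  { apply: (hmax (radical I)).
    - split.
      + exact: hK.
      + by move=> y /hJI hy; exists 1%N; rewrite expr1.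
      + by move=> m [j]; rewrite -exprM; apply: hIx.
    - by move=> y hy; exists 1%N; rewrite expr1. }
  have [hIi hId] := hI.
  exists I; split; last split=> //; last by rewrite -[x]expr1; apply: hIx.
  split=> //. split=> //.
  - by rewrite -(expr0 x); apply: hIx.
  - move=> y z hyz. apply: NNPP => hn.
    have [hy hz] : ~ I y /\ ~ I z by split=> h; apply: hn; [left|right].
    have hIcol : forall u, incl I (colon I u) by move=> u a ha; rewrite /colon; apply: idMr.
    have hJcol : forall u, incl J (colon I u) by move=> u a /hJI ha; apply: hIcol.
    case: (classic (exists m, colon I y (x ^+ m))) => [[m hm]|hnm].
    + apply: hy. have: colon I (x ^+ m) y by rewrite /colon mulrC.
      apply: (hmax (colon I (x ^+ m))) => //. split.
      * exact: colon_diff.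
      * exact: hJcol.
      * by move=> j; rewrite /colon -exprD; apply: hIx.
    + apply: hz. have: colon I y z by rewrite /colon mulrC.
      apply: (hmax (colon I y)) => //. split.
      * exact: colon_diff.
      * exact: hJcol.
      * by move=> j hj; apply: hnm; exists j.
Qed.
End R.
Unset Implicit Arguments.
Import GRing.Theory.
Local Open Scope ring_scope.

Theorem proposition3p1 (A : comPzRingType) (n : nat) (D : 'I_n -> A -> A)
  (hD : is_diff_structure D) (hK : keigher D)
  (f : dpoint D -> A * A) (hf : in_O (fun _ : dpoint D => True) f) :
  in_ker_phi f <-> in_nilradical_O f.
Proof.
  have qprime : forall q : dpoint D, is_prime q by move=> q; case: (dpoint_prime q).
  have qideal : forall q : dpoint D, is_ideal q by move=> q; case: (qprime q).
  split.
  - move=> hker. have [hf2 hfl] := hf.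
    have hq1 : forall q : dpoint D, q (f q).1.
    { move=> q. have := hker q. by rewrite /frac_eq /phi /= mulr1 mul0r subr0. }
    pose Good := fun y : A => exists k : nat, forall q : dpoint D, ~ q y ->
       exists s, ~ q s /\ s * (f q).1 ^+ k = 0.
    have hGood : is_diff_ideal D Good.
    { split; first split.
      - exists 0%N => q hq. by exfalso; apply: hq; apply: id0.
      - move=> y z [k1 h1] [k2 h2]. exists (k1 + k2)%N => q hq.
        case: (classic (q y)) => hy.
        + have hz : ~ q z by move=> hz; apply: hq; apply: idD.
          have [s [hs e]] := h2 q hz. exists s; split=> //.
          by apply: (mul0_mono e); rewrite leq_addl.
        + have [s [hs e]] := h1 q hy. exists s; split=> //.
          by apply: (mul0_mono e); rewrite leq_addr.
      - move=> r y [k h]. exists k => q hq. apply: h => hy. by apply: hq; apply: idMl.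
      - move=> i y [k h]. exists k => q hq. apply: h => hy. apply: hq.
        by case: (dpoint_prime q) => _; apply. }
    case: (classic (exists m, Good (1 ^+ m))) => [[m hm]|hn].
    + rewrite expr1n in hm. have [k hk] := hm. exists k => q.
      have [s [hs e]] := hk q (fun h => (let: And3 _ h1 _ := qprime q in h1) h).
      exists s; split=> //=. by rewrite mulr1 mul0r subr0.
    + exfalso.
      have [P [hP [hGP hP1]]] := krull hD hK (x:=1) hGood (fun m hm => hn (ex_intro _ m hm)).
      pose p := DPoint hP.
      have [W [[Ek hEk] Wp _ [a [b hab]]]] := hfl p I.
      have [e [Eke hne]] : exists e, Ek e /\ ~ p e.
      { apply: NNPP => h. apply: ((proj1 (hEk p)) Wp) => x Ex. apply: NNPP => hx.
        by apply: h; exists x. }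
      have hWe : forall q : dpoint D, ~ q e -> W q.
      { move=> q hq. apply/(hEk q) => hall. by apply: hq; apply: hall. }
      have haq : forall q : dpoint D, W q -> q a.
      { move=> q Wq. have [hb [t [ht et]]] := hab q Wq.
        have h0 : q (t * ((f q).1 * b - a * (f q).2)) by rewrite et; apply: id0.
        have h1 : q ((f q).1 * b - a * (f q).2).
        { by case: (qprime q) => _ _ /(_ _ _ h0) [] //. }
        have h2 : q (a * (f q).2).
        { have -> : a * (f q).2 = (f q).1 * b - ((f q).1 * b - a * (f q).2) by rewrite opprB addrC subrK.
          apply: idB => //; apply: idMr => //. }
        by case: (qprime q) => _ _ /(_ _ _ h2) [] // /hf2. }
      have J0 : is_diff_ideal D (fun y : A => y = 0).
      { split; first split.
        - by [].
        - by move=> y z -> ->; rewrite addr0.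
        - by move=> r y ->; rewrite mulr0.
        - by move=> i y ->; apply: D0. }
      have [m hm] : exists m, (e * a) ^+ m = 0.
      { apply: NNPP => hn2.
        have [P' [hP' [_ hP'ea]]] := krull hD hK (x:=e * a) J0 (fun m hm => hn2 (ex_intro _ m hm)).
        pose p' := DPoint hP'.
        have hp'e : ~ p' e by move=> h; apply: hP'ea; apply: (@idMr _ p') => //.
        apply: hP'ea. apply: (@idMl _ p') => //. exact: haq (hWe _ hp'e). }
      have hG : Good (e ^+ m.+1).
      { exists m => q hq.
        have hqe : ~ q e by move=> h; apply: hq; rewrite exprS; apply: idMr.
        have Wq := hWe q hqe. have [hb [t [ht et]]] := hab q Wq.
        exists (e ^+ m.+1 * (t * b) ^+ m); split.
        - apply: (prime_nM (qprime q)); first exact: (prime_npow (qprime q)).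
          by apply: (prime_npow (qprime q)); apply: (prime_nM (qprime q)).
        - have key : t * b * (f q).1 = t * a * (f q).2.
          { apply/eqP; rewrite -subr_eq0; apply/eqP.
            rewrite -et mulrBr !mulrA; congr (_ - _); by rewrite -!mulrA (mulrC b). }
          rewrite -mulrA -exprMn key exprS -mulrA (mulrC t a) -(mulrA a) exprMn (mulrA (e ^+ m)) -exprMn hm.
          by rewrite mul0r mulr0. }
      apply: hne. apply: (prime_pow (k:=m.+1) (proj1 hP)). exact: hGP.
  - move=> [k hk] p. have [s [hs e]] := hk p.
    rewrite /frac_eq /phi /= mulr1 mul0r subr0.
    move: e. rewrite /loc_pow /= mulr1 mul0r subr0 => e.
    have h0 : p (s * (f p).1 ^+ k) by rewrite e; apply: id0.
    case: (qprime p) => _ _ /(_ _ _ h0) [] // /(prime_pow (qprime p)) //.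
Qed.
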